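(* For every $n\ge3$: - the number of pairs $(T,\{\ell_1,\ell_2\})$, with $T$ a plane tree on $n$ vertices and $\{\ell_1,\ell_2\}$ an unordered pair of distinct leaves of $T$, is $\frac{(2n-5)!}{((n-3)!)^2}$; - the sum of $d(\ell_1,\ell_2)$ over all such pairs is $(n-2)4^{n-3}+\frac{(2n-5)!}{((n-3)!)^2}$.
   Context: General (plane) trees are rooted trees in which each vertex may have any number of children, linearly ordered. The size of a tree is its number of vertices. A leaf is a vertex with no children; in particular the root of a tree with at least two vertices is not a leaf. $d(u,w)$ is the number of edges of the path between $u$ and $w$. *)

(* Defs.v *)
From mathcomp Require Import all_boot.
From Stdlib Require List.
Set Implicit Arguments. Unset Strict Implicit. Unset Printing Implicit Defensive.

Inductive ptree : Type := Node of seq ptree.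

Fixpoint ptsize (t : ptree) : nat :=
  let: Node ts := t in (sumn (map ptsize ts)).+1.

(* A vertex of a tree is addressed by the sequence of child indices on the
   path from the root.  [leaves t] lists the addresses of the leaves of t
   (vertices with no children), left to right; they are pairwise distinct. *)
Fixpoint leaves (t : ptree) : seq (seq nat) :=
  let: Node ts := t in
  match ts with
  | [::] => [:: [::]]
  | _ => (fix go (i : nat) (ts : seq ptree) : seq (seq nat) :=
            match ts with
            | [::] => [::]
            | u :: ts' => map (cons i) (leaves u) ++ go i.+1 ts'
            end) 0 ts
  end.

(* Length of the longest common prefix of two addresses
   (= depth of the lowest common ancestor). *)
Fixpoint lcp (p q : seq nat) : nat :=
  match p, q with
  | a :: p', b :: q' => if a == b then (lcp p' q').+1 else 0
  | _, _ => 0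
  end.

Definition vdist (p q : seq nat) : nat := size p + size q - (lcp p q).*2.

Fixpoint upairs (T : Type) (s : seq T) : seq (T * T) :=
  match s with
  | [::] => [::]
  | x :: s' => map (pair x) s' ++ upairs s'
  end.

Definition nleafpairs (t : ptree) : nat := size (upairs (leaves t)).

Definition sumleafdist (t : ptree) : nat :=
  sumn [seq vdist pq.1 pq.2 | pq <- upairs (leaves t)].

(* Main.v *)
From HB Require Import structures.
Require Import Defs.
From mathcomp Require Import all_boot all_algebra zify.
From Stdlib Require Import Ring FunctionalExtensionality Lia.
From Stdlib Require List.
Set Implicit Arguments. Unset Strict Implicit. Unset Printing Implicit Defensive.
Import GRing.Theory.

Fixpoint enc (t : ptree) : GenTree.tree unit :=
  let: Node ts := t in GenTree.Node 0 (map enc ts).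
Fixpoint dec (g : GenTree.tree unit) : ptree :=
  match g with GenTree.Leaf _ => Node [::] | GenTree.Node _ gs => Node (map dec gs) end.

Fixpoint ptree_ind2 (P : ptree -> Prop)
  (H : forall ts, foldr (fun t acc => P t /\ acc) True ts -> P (Node ts)) (t : ptree) : P t :=
  let: Node ts := t in
  H ts ((fix go (ts : seq ptree) : foldr (fun t acc => P t /\ acc) True ts :=
     match ts with [::] => I | u :: us => conj (ptree_ind2 H u) (go us) end) ts).

Lemma encK : cancel enc dec.
Proof.
elim/ptree_ind2 => ts IH /=; congr Node; elim: ts IH => //= u us IHu [h1 h2].
by rewrite h1 IHu.
Qed.

HB.instance Definition _ := Equality.copy ptree (can_type encK).

Definition fsz (ts : seq ptree) := sumn (map ptsize ts).

Fixpoint FF (k m : nat) : seq (seq ptree) :=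
  match k with
  | 0 => if m is 0 then [:: [::]] else [::]
  | k'.+1 => if m is m'.+1 then
       flatten [seq [seq Node f :: g | f <- FF k' a, g <- FF k' (m' - a)] | a <- iota 0 m'.+1]
     else [:: [::]]
  end.
Definition Forests m := FF m m.

Lemma FF_S k m : FF k.+1 m.+1 =
  flatten [seq [seq Node f :: g | f <- FF k a, g <- FF k (m - a)] | a <- iota 0 m.+1].
Proof. by []. Qed.

Lemma FF_stable k m : m <= k -> FF k m = FF k.+1 m.
Proof.
elim: k m => [|k IH] [|m] // hm.
rewrite FF_S [RHS]FF_S; congr flatten; apply/eq_in_map => a; rewrite mem_iota add0n => /andP[_ ha].
rewrite (IH a); last lia. rewrite (IH (m - a)) //; lia.
Qed.

Lemma FF_eq k m : m <= k -> FF k m = Forests m.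
Proof.
move=> hk; rewrite /Forests -(subnKC hk).
elim: (k - m) => [|d IH]; first by rewrite addn0.
by rewrite addnS -FF_stable // leq_addr.
Qed.

Lemma ForestsS m : Forests m.+1 =
  flatten [seq [seq Node f :: g | f <- Forests a, g <- Forests (m - a)] | a <- iota 0 m.+1].
Proof.
rewrite {1}/Forests FF_S; congr flatten; apply/eq_in_map => a; rewrite mem_iota add0n => /andP[_ ha].
rewrite (FF_eq (m:=a)); last lia. rewrite FF_eq //; lia.
Qed.

Lemma Forests0 : Forests 0 = [:: [::]].
Proof. by []. Qed.

Lemma fsz_cons t ts : fsz (t :: ts) = ptsize t + fsz ts.
Proof. by []. Qed.

Lemma ptsize_node ts : ptsize (Node ts) = (fsz ts).+1.
Proof. by []. Qed.

Lemma mem_Forests m F : (F \in Forests m) = (fsz F == m).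
Proof.
elim/ltn_ind: m F => m IH F.
case: m IH => [|m] IH.
  rewrite Forests0 inE; case: F => [|[ts] F] //=.
rewrite ForestsS; apply/flatten_mapP/eqP.
  case=> a; rewrite mem_iota add0n => /andP[_ ha] /allpairsP [[f g] [/= hf hg ->]].
  rewrite IH in hf; last lia. rewrite IH in hg; last lia.
  rewrite fsz_cons ptsize_node (eqP hf) (eqP hg); lia.
case: F => [|[f] g] //; rewrite fsz_cons ptsize_node => -[hm].
exists (fsz f); first by rewrite mem_iota add0n; apply/andP; split=> //; lia.
apply/allpairsP; exists (f, g) => /=; split => //.
  by rewrite IH //; lia.
rewrite IH; last lia. apply/eqP; lia.
Qed.

Lemma uniq_flatten_key (A B : eqType) (key : B -> A) (s : seq A) (F : A -> seq B) :
  uniq s -> (forall a, a \in s -> uniq (F a)) -> (forall a x, x \in F a -> key x = a) ->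
  uniq (flatten [seq F a | a <- s]).
Proof.
move=> us uF kF; elim: s us uF => //= a s IH /andP[nas us] uF.
rewrite cat_uniq uF ?mem_head // IH // ?andbT; last by move=> b bs; apply: uF; rewrite inE bs orbT.
apply/hasPn => x /flatten_mapP [b bs xb].
apply/negP => xa; move: nas; by rewrite -(kF _ _ xa) (kF _ _ xb) bs.
Qed.

Lemma uniq_Forests m : uniq (Forests m).
Proof.
elim/ltn_ind: m => m IH; case: m IH => [|m] IH; first by [].
rewrite ForestsS; apply: (@uniq_flatten_key _ _ (fun F => if F is Node f :: _ then fsz f else 0)).
- exact: iota_uniq.
- move=> a; rewrite mem_iota add0n => /andP[_ ha]; apply: allpairs_uniq.
  + by apply: IH; lia.
  + by apply: IH; lia.
  + by move=> [f g] [f' g'] _ _ /= [-> ->].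
- move=> a x /allpairsP [[f g] [/= hf hg ->]].
  by rewrite mem_Forests in hf; apply/eqP.
Qed.

Fixpoint fleaves (i : nat) (ts : seq ptree) : seq (seq nat) :=
  match ts with
  | [::] => [::]
  | u :: ts' => map (cons i) (leaves u) ++ fleaves i.+1 ts'
  end.

Lemma leaves_node ts : leaves (Node ts) = if ts is [::] then [:: [::]] else fleaves 0 ts.
Proof. by case: ts. Qed.

Definition dep (s : seq (seq nat)) := sumn (map size s).
Definition pr (s : seq (seq nat)) := size (upairs s).
Definition ds (s : seq (seq nat)) := sumn [seq vdist p.1 p.2 | p <- upairs s].

Lemma sum_upairs_cat (h : seq nat -> seq nat -> nat) A B :
  sumn [seq h p.1 p.2 | p <- upairs (A ++ B)] =
  sumn [seq h p.1 p.2 | p <- upairs A] + sumn [seq h p.1 p.2 | p <- upairs B]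
  + sumn [seq h a b | a <- A, b <- B].
Proof.
elim: A => [|a A IH] /=; first by rewrite addn0.
rewrite !map_cat !sumn_cat IH -!map_comp /comp /=; lia.
Qed.

Lemma size_upairs_cat A B : pr (A ++ B) = pr A + pr B + size A * size B.
Proof.
rewrite /pr; elim: A => [|a A IH] /=; first lia.
rewrite !size_cat !size_map IH size_cat; lia.
Qed.

Lemma upairs_map (g : seq nat -> seq nat) A :
  upairs (map g A) = map (fun p => (g p.1, g p.2)) (upairs A).
Proof.
elim: A => //= a A ->; by rewrite map_cat -!map_comp.
Qed.

Lemma lcp_cons i p q : lcp (i :: p) (i :: q) = (lcp p q).+1.
Proof. by rewrite /= eqxx. Qed.

Lemma vdist_same i p q : vdist (i :: p) (i :: q) = vdist p q.
Proof. rewrite /vdist lcp_cons /= doubleS; lia. Qed.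

Lemma vdist_diff i j p q : i != j -> vdist (i :: p) (j :: q) = size (i :: p) + size (j :: q).
Proof. by move=> /negbTE hij; rewrite /vdist /= hij subn0. Qed.

Lemma sum_map_add (x : nat) (g : seq nat -> nat) B :
  sumn [seq x + g b | b <- B] = size B * x + sumn (map g B).
Proof. elim: B => //= b B ->; lia. Qed.

Lemma sum_allpairs_add (f g : seq nat -> nat) A B :
  sumn [seq f a + g b | a <- A, b <- B] = size B * sumn (map f A) + size A * sumn (map g B).
Proof.
elim: A => [|a A IH] /=; first by rewrite muln0.
rewrite sumn_cat IH sum_map_add; lia.
Qed.

Lemma fleaves_heads i ts : all (fun q => if q is j :: _ then i <= j else false) (fleaves i ts).
Proof.
elim: ts i => //= u us IH i; rewrite all_cat; apply/andP; split.
  by apply/allP => q /mapP [p _ ->].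
apply: sub_all (IH i.+1) => -[|j q] //; apply: ltnW.
Qed.

Fixpoint FL ts := if ts is u :: us then size (leaves u) + FL us else 0.
Fixpoint FS ts := if ts is u :: us then dep (leaves u) + size (leaves u) + FS us else 0.
Fixpoint FP ts := if ts is u :: us then pr (leaves u) + FP us + size (leaves u) * FL us else 0.
Fixpoint FD ts := if ts is u :: us then
  ds (leaves u) + FD us + FL us * (dep (leaves u) + size (leaves u)) + size (leaves u) * FS us
  else 0.

Lemma fleavesQ ts i : [/\ size (fleaves i ts) = FL ts, dep (fleaves i ts) = FS ts,
  pr (fleaves i ts) = FP ts & ds (fleaves i ts) = FD ts].
Proof.
elim: ts i => [|u us IH] i //=; have [h1 h2 h3 h4] := IH i.+1.
set A := map (cons i) (leaves u); set B := fleaves i.+1 us.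
have sA : size A = size (leaves u) by rewrite size_map.
have dA : dep A = dep (leaves u) + size (leaves u).
  rewrite /dep /A -map_comp /comp /=; elim: (leaves u) => //= p s ->; lia.
split.
- by rewrite size_cat sA h1.
- by rewrite /dep map_cat sumn_cat -/(dep A) -/(dep B) dA h2.
- by rewrite size_upairs_cat h3 sA h1 /pr /A upairs_map size_map.
rewrite /ds sum_upairs_cat -/(ds B) h4.
have -> : sumn [seq vdist a b | a <- A, b <- B] = size B * dep A + size A * dep B.
  rewrite -(sum_allpairs_add size size); congr sumn.
  apply/eq_in_allpairs => a' b' ha hb.
  move: ha => /mapP [p _ ->].
  have := allP (fleaves_heads i.+1 us) b' hb; case: b' {hb} => // j q hj.
  rewrite vdist_diff //; apply/negP => /eqP hij; move: hj; by rewrite hij ltnn.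
rewrite dA h2 sA h1 -/(ds A).
have -> : ds A = ds (leaves u).
  rewrite /ds /A upairs_map -map_comp; congr sumn; apply: eq_map => -[p q] /=.
  exact: vdist_same.
rewrite -/(ds (leaves u)); lia.
Qed.

Section FPS1.
Local Open Scope ring_scope.

Definition fps := nat -> int.
Definition f0 : fps := fun _ => 0.
Definition f1 : fps := fun n => (n == 0%N)%:R.
Definition fX : fps := fun n => (n == 1%N)%:R.
Definition fadd (f g : fps) : fps := fun n => f n + g n.
Definition fopp (f : fps) : fps := fun n => - f n.
Definition fsub (f g : fps) : fps := fun n => f n - g n.
Definition fmul (f g : fps) : fps := fun n => \sum_(i < n.+1) f i * g (n - i)%N.

Definition tr (M : nat) (f : fps) : {poly int} := \poly_(i < M) f i.

Lemma fmul_tr M f g n : (n < M)%N -> fmul f g n = (tr M f * tr M g)`_n.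
Proof.
move=> hn; rewrite coefM /fmul; apply: eq_bigr => i _.
rewrite !coef_poly; have hi := ltn_ord i.
have h1 : (i < M)%N by apply: leq_ltn_trans hn; rewrite -ltnS.
have h2 : (n - i < M)%N by apply: leq_ltn_trans hn; rewrite leq_subr.
by rewrite h1 h2.
Qed.

Lemma coefM_eql n (p q r : {poly int}) : (forall i, (i <= n)%N -> p`_i = q`_i) ->
  (p * r)`_n = (q * r)`_n.
Proof. by move=> h; rewrite !coefM; apply: eq_bigr => i _; rewrite h // -ltnS. Qed.

Lemma tr_mul n f g i : (i <= n)%N -> (tr n.+1 (fmul f g))`_i = (tr n.+1 f * tr n.+1 g)`_i.
Proof.
move=> hi; rewrite coef_poly ltnS hi; exact: fmul_tr.
Qed.

Lemma fmulA f g h : fmul f (fmul g h) = fmul (fmul f g) h.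
Proof.
apply: functional_extensionality => n.
rewrite (fmul_tr _ _ (ltnSn n)) [RHS](fmul_tr _ _ (ltnSn n)).
rewrite mulrC.
rewrite [LHS](@coefM_eql _ (tr n.+1 (fmul g h)) (tr n.+1 g * tr n.+1 h)); last by move=> i hi; apply: tr_mul.
rewrite [RHS](@coefM_eql _ (tr n.+1 (fmul f g)) (tr n.+1 f * tr n.+1 g)); last by move=> i hi; apply: tr_mul.
by rewrite mulrC mulrA.
Qed.

Lemma fmulC f g : fmul f g = fmul g f.
Proof.
apply: functional_extensionality => n.
by rewrite (fmul_tr _ _ (ltnSn n)) [RHS](fmul_tr _ _ (ltnSn n)) mulrC.
Qed.

Lemma fmul1 f : fmul f1 f = f.
Proof.
apply: functional_extensionality => n.
rewrite /fmul big_ord_recl /= subn0 mul1r big1 ?addr0 // => i _.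
by rewrite /f1 /= mul0r.
Qed.

Lemma fmulDl f g h : fmul (fadd f g) h = fadd (fmul f h) (fmul g h).
Proof.
apply: functional_extensionality => n.
by rewrite /fmul /fadd -big_split /=; apply: eq_bigr => i _; rewrite mulrDl.
Qed.

Lemma fps_ring : ring_theory f0 f1 fadd fmul fsub fopp (@eq fps).
Proof.
constructor.
- by move=> f; apply: functional_extensionality => n; rewrite /fadd /f0 add0r.
- by move=> f g; apply: functional_extensionality => n; rewrite /fadd addrC.
- by move=> f g h; apply: functional_extensionality => n; rewrite /fadd addrA.
- exact: fmul1.
- exact: fmulC.
- exact: fmulA.
- exact: fmulDl.
- by [].
- by move=> f; apply: functional_extensionality => n; rewrite /fadd /fopp /f0 subrr.
Qed.

End FPS1.

Add Ring fpsR : fps_ring.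

Section FPS2.
Local Open Scope ring_scope.
Lemma fmulX0 H : fmul fX H 0 = 0.
Proof. by rewrite /fmul big_ord_recl big_ord0 /fX /= mul0r addr0. Qed.

Lemma fmulXS H m : fmul fX H m.+1 = H m.
Proof.
rewrite /fmul big_ord_recl big_ord_recl /= /fX /= mul0r add0r mul1r subn1 /=.
rewrite big1 ?addr0 // => i _; by rewrite /bump /= mul0r.
Qed.

Definition theta (f : fps) : fps := fun n => n%:R * f n.

Lemma theta_mul f g : theta (fmul f g) = fadd (fmul (theta f) g) (fmul f (theta g)).
Proof.
apply: functional_extensionality => n.
rewrite /theta /fmul /fadd -big_split mulr_sumr /=; apply: eq_bigr => i _.
have hi : (i <= n)%N by rewrite -ltnS.
by rewrite -{1}(subnKC hi) natrD mulrDl -mulrA [f i * (_ * _)]mulrCA.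
Qed.

Lemma theta_add f g : theta (fadd f g) = fadd (theta f) (theta g).
Proof. by apply: functional_extensionality => n; rewrite /theta /fadd mulrDr. Qed.
Lemma theta_sub f g : theta (fsub f g) = fsub (theta f) (theta g).
Proof. by apply: functional_extensionality => n; rewrite /theta /fsub mulrBr. Qed.
Lemma theta1 : theta f1 = f0.
Proof. by apply: functional_extensionality => -[|n]; rewrite /theta /f1 /f0 /= ?mul0r ?mulr0. Qed.
Lemma thetaX : theta fX = fX.
Proof. by apply: functional_extensionality => -[|[|n]]; rewrite /theta /fX /= ?mul0r ?mulr0 ?mul1r. Qed.

End FPS2.

Section Comb3.
Local Open Scope ring_scope.

Definition Fsum (q : seq ptree -> nat) : fps := fun m => \sum_(F <- Forests m) (q F)%:Z.

Lemma Fsum0 q : Fsum q 0 = (q [::])%:Z.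
Proof. by rewrite /Fsum Forests0 big_seq1. Qed.

Lemma FsumS (h : seq ptree -> int) m :
  \sum_(F <- Forests m.+1) h F =
  \sum_(i < m.+1) \sum_(f <- Forests i) \sum_(g <- Forests (m - i)) h (Node f :: g).
Proof.
rewrite ForestsS big_flatten big_map /=.
rewrite -(big_mkord xpredT (fun i => \sum_(f <- Forests i) \sum_(g <- Forests (m - i)) h (Node f :: g))).
rewrite /index_iota subn0; apply: eq_bigr => i _.
by rewrite big_allpairs_dep.
Qed.

Lemma dsum_prod (A B : seq ptree -> int) s t :
  \sum_(f <- s) \sum_(g <- t) A f * B g = (\sum_(f <- s) A f) * (\sum_(g <- t) B g).
Proof. rewrite mulr_suml; apply: eq_bigr => f _; by rewrite mulr_sumr. Qed.

Definition tL (f : seq ptree) : nat := (f == [::]) + FL f.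

Lemma tL_sum i : \sum_(f <- Forests i) (tL f)%:Z = fadd f1 (Fsum FL) i.
Proof.
rewrite /tL /fadd /Fsum; under eq_bigr do rewrite PoszD; rewrite big_split /=; congr (_ + _).
case: i => [|i]; first by rewrite Forests0 big_seq1.
rewrite big_seq big1 // => f; rewrite mem_Forests; case: f => //= _ _.
Qed.

Section DS.
Variables (s t : seq (seq ptree)) (h : seq ptree -> seq ptree -> int).
Notation S A := (\sum_(f <- s) A f).
Notation T B := (\sum_(g <- t) B g).
Lemma dsum1 A1 B1 : (forall f g, h f g = A1 f * B1 g) ->
  \sum_(f <- s) \sum_(g <- t) h f g = S A1 * T B1.
Proof.
move=> H; rewrite -!dsum_prod; apply: eq_bigr => f _; apply: eq_bigr => g _; exact: H.
Qed.
Lemma dsum2 A1 B1 A2 B2 : (forall f g, h f g = A1 f * B1 g + A2 f * B2 g) ->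
  \sum_(f <- s) \sum_(g <- t) h f g = S A1 * T B1 + S A2 * T B2.
Proof.
move=> H; rewrite -!dsum_prod -big_split; apply: eq_bigr => f _.
rewrite -big_split; apply: eq_bigr => g _; exact: H.
Qed.
Lemma dsum3 A1 B1 A2 B2 A3 B3 : (forall f g, h f g = A1 f * B1 g + A2 f * B2 g + A3 f * B3 g) ->
  \sum_(f <- s) \sum_(g <- t) h f g = S A1 * T B1 + S A2 * T B2 + S A3 * T B3.
Proof.
move=> H; rewrite -!dsum_prod -!big_split; apply: eq_bigr => f _.
rewrite -!big_split; apply: eq_bigr => g _; exact: H.
Qed.
Lemma dsum4 A1 B1 A2 B2 A3 B3 A4 B4 :
  (forall f g, h f g = A1 f * B1 g + A2 f * B2 g + A3 f * B3 g + A4 f * B4 g) ->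
  \sum_(f <- s) \sum_(g <- t) h f g = S A1 * T B1 + S A2 * T B2 + S A3 * T B3 + S A4 * T B4.
Proof.
move=> H; rewrite -!dsum_prod -!big_split; apply: eq_bigr => f _.
rewrite -!big_split; apply: eq_bigr => g _; exact: H.
Qed.
End DS.

Lemma leavesQ f : [/\ size (leaves (Node f)) = tL f, dep (leaves (Node f)) = FS f,
  pr (leaves (Node f)) = FP f & ds (leaves (Node f)) = FD f].
Proof.
rewrite leaves_node /tL; case: f => [|u us]; first by [].
by have [-> -> -> ->] := fleavesQ (u :: us) 0.
Qed.

Definition one_ (f : seq ptree) : int := (1%N)%:Z.
Definition cF := Fsum (fun _ => 1%N).
Definition lF := Fsum FL.
Definition sF := Fsum FS.
Definition pF := Fsum FP.
Definition dF := Fsum FD.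

Lemma cF_sum i : \sum_(f <- Forests i) one_ f = cF i.
Proof. by []. Qed.

Lemma cF_eq : cF = fadd f1 (fmul fX (fmul cF cF)).
Proof.
apply: functional_extensionality => -[|m]; first by rewrite /fadd fmulX0 /cF Fsum0.
rewrite /fadd fmulXS /f1 /= add0r /cF /Fsum FsumS /fmul; apply: eq_bigr => i _.
by rewrite (@dsum1 _ _ _ one_ one_) ?cF_sum.
Qed.

Lemma lF_eq : lF = fmul fX (fadd (fmul (fadd f1 lF) cF) (fmul cF lF)).
Proof.
apply: functional_extensionality => -[|m]; first by rewrite fmulX0 /lF Fsum0.
rewrite fmulXS /fadd /fmul -big_split /lF /Fsum FsumS; apply: eq_bigr => i _ /=.
rewrite (@dsum2 _ _ _ (fun f => (tL f)%:Z) one_ one_ (fun g => (FL g)%:Z)).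
  by rewrite tL_sum cF_sum.
move=> f g /=; have [-> _ _ _] := leavesQ f; by rewrite /one_ PoszD mulr1 mul1r.
Qed.

Lemma sF_eq : sF = fmul fX (fadd (fmul (fadd sF (fadd f1 lF)) cF) (fmul cF sF)).
Proof.
apply: functional_extensionality => -[|m]; first by rewrite fmulX0 /sF Fsum0.
rewrite fmulXS /fadd /fmul -big_split /sF /lF /Fsum FsumS; apply: eq_bigr => i _ /=.
rewrite (@dsum2 _ _ _ (fun f => (FS f)%:Z + (tL f)%:Z) one_ one_ (fun g => (FS g)%:Z)).
  by rewrite big_split tL_sum cF_sum.
move=> f g /=; have [-> -> _ _] := leavesQ f; by rewrite /one_ !PoszD mulr1 mul1r.
Qed.

Lemma pF_eq : pF = fmul fX (fadd (fadd (fmul pF cF) (fmul cF pF)) (fmul (fadd f1 lF) lF)).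
Proof.
apply: functional_extensionality => -[|m]; first by rewrite fmulX0 /pF Fsum0.
rewrite fmulXS /fadd /fmul -!big_split /pF /lF /Fsum FsumS; apply: eq_bigr => i _ /=.
rewrite (@dsum3 _ _ _ (fun f => (FP f)%:Z) one_ one_ (fun g => (FP g)%:Z)
   (fun f => (tL f)%:Z) (fun g => (FL g)%:Z)).
  by rewrite tL_sum cF_sum.
move=> f g /=; have [-> _ -> _] := leavesQ f; by rewrite /one_ !PoszD PoszM mulr1 mul1r.
Qed.

Lemma dF_eq : dF = fmul fX (fadd (fadd (fadd (fmul dF cF) (fmul cF dF))
   (fmul (fadd sF (fadd f1 lF)) lF)) (fmul (fadd f1 lF) sF)).
Proof.
apply: functional_extensionality => -[|m]; first by rewrite fmulX0 /dF Fsum0.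
rewrite fmulXS /fadd /fmul -!big_split /dF /sF /lF /Fsum FsumS; apply: eq_bigr => i _ /=.
rewrite (@dsum4 _ _ _ (fun f => (FD f)%:Z) one_ one_ (fun g => (FD g)%:Z)
   (fun f => (FS f)%:Z + (tL f)%:Z) (fun g => (FL g)%:Z)
   (fun f => (tL f)%:Z) (fun g => (FS g)%:Z)).
  by rewrite big_split tL_sum cF_sum.
move=> f g /=; have [-> -> _ ->] := leavesQ f.
by rewrite /one_ !PoszD !PoszM mulr1 mul1r [(FL g)%:Z * _]mulrC.
Qed.

End Comb3.


Declare Scope fps_scope.
Delimit Scope fps_scope with F.
Notation "a + b" := (fadd a b) : fps_scope.
Notation "a * b" := (fmul a b) : fps_scope.
Notation "a - b" := (fsub a b) : fps_scope.
Notation "1" := f1 : fps_scope.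
Notation "0" := f0 : fps_scope.
Notation X := fX.

Section Alg.
Local Open Scope fps_scope.

Lemma sub_eq0 (a b : fps) : a - b = 0 -> a = b.
Proof.
move=> h; apply: functional_extensionality => n.
have := f_equal (fun f => f n) h; rewrite /fsub /f0 => /eqP; rewrite GRing.subr_eq0 => /eqP //.
Qed.

Definition two : fps := 1 + 1.
Definition four : fps := two + two.
Definition v := 1 - two * X * cF.
Definition u := cF * (1 + lF).

Lemma eC : cF - (1 + X * (cF * cF)) = 0.
Proof. rewrite {1}cF_eq; ring. Qed.
Lemma eL : lF - X * ((1 + lF) * cF + cF * lF) = 0.
Proof. rewrite {1}lF_eq; ring. Qed.
Lemma eS : sF - X * ((sF + (1 + lF)) * cF + cF * sF) = 0.
Proof. rewrite {1}sF_eq; ring. Qed.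
Lemma eP : pF - X * ((pF * cF + cF * pF) + (1 + lF) * lF) = 0.
Proof. rewrite {1}pF_eq; ring. Qed.
Lemma eD : dF - X * (((dF * cF + cF * dF) + (sF + (1 + lF)) * lF) + (1 + lF) * sF) = 0.
Proof. rewrite {1}dF_eq; ring. Qed.

Lemma e1 : lF * v - X * cF = 0.
Proof.
have h : lF * v - X * cF = lF - X * ((1 + lF) * cF + cF * lF) by rewrite /v /two; ring.
by rewrite h eL.
Qed.

Lemma e2 : u * v - 1 = 0.
Proof.
have h : u * v - 1 = cF * (lF * v - X * cF) + (cF - (1 + X * (cF * cF))) by rewrite /u /v /two; ring.
rewrite h e1 eC; ring.
Qed.

Lemma e3 : lF - X * cF * u = 0.
Proof.
have h : lF - X * cF * u = u * (lF * v - X * cF) - lF * (u * v - 1) by ring.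
rewrite h e1 e2; ring.
Qed.

Lemma e5 : u * u * (1 - four * X) - 1 = 0.
Proof.
have h : u * u * (1 - four * X) - 1 = (u * v - 1) * (u * v + 1)
   + u * u * X * (1 + 1 + 1 + 1) * (cF - (1 + X * (cF * cF))) by rewrite /v /four /two; ring.
rewrite h e2 eC; ring.
Qed.

Lemma e6 : sF * v - X * u = 0.
Proof.
have h : sF * v - X * u = sF - X * ((sF + (1 + lF)) * cF + cF * sF) by rewrite /v /u /two; ring.
by rewrite h eS.
Qed.

Lemma e7 : sF - X * u * u = 0.
Proof.
have h : sF - X * u * u = u * (sF * v - X * u) - sF * (u * v - 1) by ring.
rewrite h e6 e2; ring.
Qed.

Lemma e8 : (1 + lF) - u * (1 - X * cF) = 0.
Proof.
have h : (1 + lF) - u * (1 - X * cF) = (f0 - (1 + lF)) * (cF - (1 + X * (cF * cF))) by rewrite /u; ring.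
rewrite h eC; ring.
Qed.

Lemma e9 : pF * v - X * X * u * u = 0.
Proof.
have h : pF * v - X * X * u * u =
  (pF - X * ((pF * cF + cF * pF) + (1 + lF) * lF))
  + X * lF * ((1 + lF) - u * (1 - X * cF))
  + X * u * (1 - X * cF) * (lF - X * cF * u)
  + X * X * u * u * (cF - (1 + X * (cF * cF))) by rewrite /v /two; ring.
rewrite h eP e8 e3 eC; ring.
Qed.

Lemma pF_closed : pF = X * X * (u * u * u).
Proof.
apply: sub_eq0.
have h : pF - X * X * (u * u * u) = u * (pF * v - X * X * u * u) - pF * (u * v - 1) by ring.
rewrite h e9 e2; ring.
Qed.

Lemma e11 : dF * v - X * X * (u * u + u * u * u) = 0.
Proof.
have h : dF * v - X * X * (u * u + u * u * u) =
  (dF - X * (((dF * cF + cF * dF) + (sF + (1 + lF)) * lF) + (1 + lF) * sF))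
  + X * lF * ((1 + lF) - u * (1 - X * cF))
  + X * u * (1 - X * cF) * (lF - X * cF * u)
  + X * X * u * u * (cF - (1 + X * (cF * cF)))
  + X * X * u * u * (lF - X * cF * u)
  + X * X * u * u * ((1 + lF) - u * (1 - X * cF))
  + X * (1 + lF + lF) * (sF - X * u * u) by rewrite /v /two; ring.
rewrite h eD e8 e3 eC e7; ring.
Qed.

Lemma dF_closed : dF = X * X * (u * u * u + u * u * u * u).
Proof.
apply: sub_eq0.
have h : dF - X * X * (u * u * u + u * u * u * u) =
  u * (dF * v - X * X * (u * u + u * u * u)) - dF * (u * v - 1) by ring.
rewrite h e11 e2; ring.
Qed.
End Alg.


Section Coef.
Local Open Scope fps_scope.

Lemma theta_four : theta four = 0.
Proof. rewrite /four /two !theta_add theta1; ring. Qed.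

Definition Y := theta u * (1 - four * X) - two * X * u.

Lemma thetaY : theta (u * u * (1 - four * X)) = two * u * Y.
Proof.
rewrite [theta (u * u * _)]theta_mul [theta (u * u)]theta_mul theta_sub theta1 [theta (four * X)]theta_mul theta_four thetaX /Y /four /two; ring.
Qed.

Lemma two_inj f : two * f = 0 -> f = 0.
Proof.
move=> h; have h' : f + f = 0 by rewrite -h /two; ring.
apply: functional_extensionality => n.
have := f_equal (fun g => g n) h'; rewrite /fadd /f0 => hn; lia.
Qed.

Lemma Y0 : Y = 0.
Proof.
have h1 : u * Y = 0.
  apply: two_inj; rewrite -[_ * (u * Y)](_ : two * u * Y = _); last by ring.
  rewrite -thetaY; move/sub_eq0: e5 => ->; exact: theta1.
have h : Y = v * (u * Y) - (u * v - 1) * Y by ring.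
rewrite h h1 e2; ring.
Qed.

Lemma theta_u : theta u = two * X * (u * u * u).
Proof.
apply: sub_eq0.
have h : theta u - two * X * (u * u * u) = u * u * Y - theta u * (u * u * (1 - four * X) - 1)
  by rewrite /Y; ring.
rewrite h Y0 e5; ring.
Qed.

Lemma coef_1m4X f n : (f * (1 - four * X)) n.+1 = (f n.+1 - 4%:Z * f n)%R.
Proof.
rewrite (_ : f * (1 - four * X) = f - X * (f + f + f + f)); last by rewrite /four /two; ring.
rewrite /fsub fmulXS /fadd; congr (_ - _)%R; lia.
Qed.

Lemma coef_1m4X0 f : (f * (1 - four * X)) 0%N = f 0%N.
Proof.
rewrite (_ : f * (1 - four * X) = f - X * (f + f + f + f)); last by rewrite /four /two; ring.
by rewrite /fsub fmulX0 GRing.subr0.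
Qed.

Lemma mul0coef f g : (f * g) 0%N = (f 0%N * g 0%N)%R.
Proof. by rewrite /fmul big_ord_recl big_ord0 GRing.addr0. Qed.

Lemma u0 : u 0%N = 1%R.
Proof. by rewrite /u mul0coef /cF /lF /fadd !Fsum0 /f1. Qed.

Definition w := u * u.
Lemma w_coef n : w n = Posz (4 ^ n).
Proof.
have h := sub_eq0 e5.
elim: n => [|n IH].
  by have := f_equal (fun g => g 0%N) h; rewrite coef_1m4X0.
have := f_equal (fun g => g n.+1) h; rewrite coef_1m4X /f1 /= -/w IH => hn.
rewrite expnS PoszM; by move/eqP: hn; rewrite GRing.subr_eq0 => /eqP.
Qed.

Definition q := w * w.
Lemma q_coef n : q n = Posz (n.+1 * 4 ^ n).
Proof.
have h : q * (1 - four * X) = w.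
  apply: sub_eq0.
  have -> : q * (1 - four * X) - w = w * (u * u * (1 - four * X) - 1) by rewrite /q /w; ring.
  rewrite e5; ring.
elim: n => [|n IH].
  have := f_equal (fun g => g 0%N) h; rewrite coef_1m4X0 w_coef => ->; by rewrite expn0.
have := f_equal (fun g => g n.+1) h; rewrite coef_1m4X IH w_coef => hn.
have -> : q n.+1 = (Posz (4 ^ n.+1) + 4%:Z * Posz (n.+1 * 4 ^ n))%R.
  by rewrite -hn GRing.subrK.
rewrite !expnS !PoszM; lia.
Qed.

Lemma u_rec n : ((n.+1)%:R * u n.+1 = 4%:Z * (n%:R * u n) + (u n + u n))%R.
Proof.
have := f_equal (fun g => g n.+1) Y0; rewrite /Y /fsub coef_1m4X.
rewrite (_ : two * X * u = X * (u + u)); last by rewrite /two; ring.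
rewrite fmulXS /fadd /theta /f0 => h.
move/eqP: h; rewrite GRing.subr_eq0 => /eqP <-; by rewrite GRing.addrC GRing.subrK.
Qed.

Lemma u3_rec n : ((n.+1)%:R * u n.+1 = (u * u * u)%F n + (u * u * u)%F n)%R.
Proof.
have := f_equal (fun g => g n.+1) theta_u.
rewrite (_ : two * X * (u * u * u) = X * (u * u * u + u * u * u)); last by rewrite /two; ring.
by rewrite fmulXS /fadd /theta.
Qed.

Lemma u_fact n : (u n * (n`!)%:R * (n`!)%:R = ((2 * n)`!)%:R :> int)%R.
Proof.
elim: n => [|n IH]; first by rewrite u0.
have hR := u_rec n.
rewrite factS (_ : (2 * n.+1 = (2 * n).+2)%N); last lia.
rewrite factS factS !natrM.
move: IH hR; set a := u n; set b := u n.+1; set F := ((n`!)%:R : int); set G := (((2 * n)`!)%:R : int).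
move=> IH hR.
have E1 : (b * ((n.+1)%:R * F) * ((n.+1)%:R * F) = (n.+1)%:R * F * F * ((n.+1)%:R * b) :> int)%R by lia.
rewrite E1 hR.
have E2 : ((n.+1)%:R * F * F * (4%:Z * (n%:R * a) + (a + a)) = (n.+1)%:R * (4 * n + 2)%:R * (a * F * F) :> int)%R by lia.
rewrite E2 IH; lia.
Qed.

Lemma u3_fact n : ((u * u * u)%F n * (n`!)%:R * (n`!)%:R = ((2 * n).+1`!)%:R :> int)%R.
Proof.
have h1 := u3_rec n; have h2 := u_fact n.+1.
rewrite (factS n) (_ : (2 * n.+1 = ((2 * n).+1).+1)%N) in h2; last lia.
rewrite (factS (2 * n).+1) in h2.
move: h1 h2; set p := (u * u * u)%F n; set b := u n.+1.
move: (n`!)%N ((2 * n).+1`!)%N => F' H'; rewrite !natrM => h1 h2.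
set F := (F'%:R : int); set H := (H'%:R : int).
have nz : ((2 * n.+1)%:R != 0 :> int)%R by apply/eqP; lia.
apply: (GRing.mulIf nz).
have E : (b * ((n.+1)%:R * F) * ((n.+1)%:R * F) = (n.+1)%:R * F * F * ((n.+1)%:R * b) :> int)%R by lia.
rewrite E h1 in h2. lia.
Qed.
End Coef.


Lemma Posz_sumn (A : Type) (g : A -> nat) (l : seq A) :
  Posz (sumn (map g l)) = (\sum_(x <- l) Posz (g x))%R.
Proof. elim: l => [|a l IH]; first by rewrite big_nil. by rewrite big_cons /= PoszD IH. Qed.

Lemma in_In (T : eqType) (x : T) (s : seq T) : List.In x s <-> x \in s.
Proof.
elim: s => [|a s IH] //=; rewrite in_cons; split.
  by case=> [->|/IH ->]; rewrite ?eqxx ?orbT.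
by case/orP => [/eqP ->|/IH]; [left|right].
Qed.

Lemma uniq_NoDup (T : eqType) (s : seq T) : uniq s -> List.NoDup s.
Proof.
elim: s => [|a s IH] /=; first by constructor.
case/andP => ha us; constructor; last exact: IH.
by move/in_In; apply/negP.
Qed.

Lemma pF_coef m : pF m.+2 = (u * u * u)%F m.
Proof.
rewrite pF_closed (_ : (X * X * (u * u * u))%F = (X * (X * (u * u * u)))%F); last by ring.
by rewrite !fmulXS.
Qed.

Lemma dF_coef m : dF m.+2 = ((u * u * u)%F m + q m)%R.
Proof.
rewrite dF_closed (_ : (X * X * (u * u * u + u * u * u * u))%F = (X * (X * (u * u * u + q)))%F); last by rewrite /q /w; ring.
by rewrite !fmulXS.
Qed.

Theorem proposition3p4 (n : nat) (hn : 3 <= n) :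
  exists s : list ptree,
    List.NoDup s /\ (forall t, List.In t s <-> ptsize t = n) /\
    sumn (map nleafpairs s) = (2 * n - 5)`! %/ ((n - 3)`! ^ 2) /\
    sumn (map sumleafdist s) =
      (n - 2) * 4 ^ (n - 3) + (2 * n - 5)`! %/ ((n - 3)`! ^ 2).
Proof.
exists (map Node (Forests n.-1)); split.
  apply: uniq_NoDup; rewrite map_inj_uniq ?uniq_Forests //; by move=> a b [].
split.
  move=> t; rewrite in_In; split.
    by case/mapP => f; rewrite mem_Forests => /eqP hf ->; rewrite ptsize_node hf; lia.
  case: t => f; rewrite ptsize_node => hf; apply/mapP; exists f => //.
  by rewrite mem_Forests; apply/eqP; lia.
have [m hm] : exists m, n = m.+3 by exists (n - 3); lia.
have e1 : (2 * n - 5 = (2 * m).+1)%N by lia.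
have e2 : (n - 3 = m)%N by lia.
have e3 : (n - 2 = m.+1)%N by lia.
rewrite e1 e2 e3 hm /= -!map_comp.
have hP : sumn [seq nleafpairs (Node x) | x <- Forests m.+2] = sumn (map FP (Forests m.+2)).
  by congr sumn; apply: eq_map => f /=; have [_ _ h _] := leavesQ f; rewrite -h.
have hD : sumn [seq sumleafdist (Node x) | x <- Forests m.+2] = sumn (map FD (Forests m.+2)).
  by congr sumn; apply: eq_map => f /=; have [_ _ _ h] := leavesQ f; rewrite -h.
rewrite /comp hP hD.
have P1 : Posz (sumn (map FP (Forests m.+2))) = (u * u * u)%F m by rewrite Posz_sumn -pF_coef.
have D1 : Posz (sumn (map FD (Forests m.+2))) = ((u * u * u)%F m + q m)%R
  by rewrite Posz_sumn -dF_coef.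
have F3 := u3_fact m.
have key : sumn (map FP (Forests m.+2)) = ((2 * m).+1)`! %/ (m`! ^ 2).
  have hnat : (sumn (map FP (Forests m.+2)) * m`! ^ 2 = ((2 * m).+1)`!)%N.
    move: F3; rewrite -P1; move: (sumn _) (m`!) ((2 * m).+1)`! => a b c; lia.
  by rewrite -hnat mulnK // expn_gt0 fact_gt0.
split; first exact: key.
rewrite -key; move: D1; rewrite q_coef -P1.
move: (sumn (map FD _)) (sumn (map FP _)) => a b; lia.
Qed.
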